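(* Let $X$ be a topological space, let $\rho:\mathcal{F}\to[\Psi]^\omega$ be a partition regular function, and let $x:\Psi\to X$ be a sequence. Then \[ \Lambda_x(\mathcal{I}_\rho)\subseteq\Lambda_x(\rho)\subseteq\Gamma_x(\rho). \]
   Context: Let $\Omega,\Psi$ be countably infinite sets, $[\Psi]^\omega$ the family of infinite subsets of $\Psi$, and $\mathcal{F}\subseteq[\Omega]^\omega$ a nonempty family with $A\setminus K\in\mathcal{F}$ for all $A\in\mathcal{F}$ and finite $K\subseteq\Omega$. A function $\rho:\mathcal{F}\to[\Psi]^\omega$ is partition regular if: (M) $E\subseteq F$ in $\mathcal{F}$ implies $\rho(E)\subseteq\rho(F)$; (R) for every $F\in\mathcal{F}$ and $A,B\subseteq\Psi$ with $\rho(F)=A\cup B$ there is $E\in\mathcal{F}$ with $\rho(E)\subseteq A$ or $\rho(E)\subseteq B$; (S) for every $F\in\mathcal{F}$ there is $E\subseteq F$, $E\in\mathcal{F}$, such that for every $a\in\rho(E)$ there is a finite $K\subseteq\Omega$ with $a\notin\rho(E\setminus K)$. $\mathcal{I}_\rho=\{S\subseteq\Psi:\forall F\in\mathcal{F}\ \rho(F)\not\subseteq S\}$ (an ideal on $\Psi$), and $\mathcal{I}_\rho^+=\mathcal{P}(\Psi)\setminus\mathcal{I}_\rho$. $\Gamma_x(\rho)$ ($\rho$-cluster points) is the set of $\eta\in X$ such that for every neighborhood $U$ of $\eta$ there is $F\in\mathcal{F}$ with $\rho(F)\subseteq\{s\in\Psi:x_s\in U\}$. $\Lambda_x(\rho)$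 ($\rho$-limit points) is the set of $\eta\in X$ for which there is $F\in\mathcal{F}$ such that for every neighborhood $U$ of $\eta$ there is a finite $K\subseteq\Omega$ with $x_s\in U$ for all $s\in\rho(F\setminus K)$. $\Lambda_x(\mathcal{I}_\rho)$ is the set of $\eta\in X$ for which there is $S\in\mathcal{I}_\rho^+$ such that the subsequence $(x_s)_{s\in S}$ converges to $\eta$ in the ordinary sense (for each neighborhood $U$ of $\eta$, $x_s\in U$ for all but finitely many $s\in S$). *)

(* Defs.v *)
From mathcomp Require Import all_boot all_classical topology.
Set Implicit Arguments. Unset Strict Implicit. Unset Printing Implicit Defensive.
Local Open Scope classical_set_scope.

Definition countably_infinite (T : Type) : Prop :=
  countable [set: T] /\ infinite_set [set: T].

Definition admissible_family (Omega : Type) (F : set (set Omega)) : Prop :=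
  [/\ F !=set0,
      (forall A, F A -> infinite_set A) &
      (forall A K, F A -> finite_set K -> F (A `\` K))].

(* rho : F -> [Psi]^omega, represented as a total function that is only used
   on members of F. *)
Definition partition_regular (Omega Psi : Type) (F : set (set Omega))
    (rho : set Omega -> set Psi) : Prop :=
  [/\ (forall E, F E -> infinite_set (rho E)),
      (forall E G, F E -> F G -> E `<=` G -> rho E `<=` rho G),
      (forall G (A B : set Psi), F G -> rho G = A `|` B ->
          exists2 E, F E & (rho E `<=` A \/ rho E `<=` B)) &
      (forall G, F G -> exists E, [/\ E `<=` G, F E &
          forall a, rho E a -> exists2 K, finite_set K & ~ rho (E `\` K) a])].

Definition I_rho (Omega Psi : Type) (F : set (set Omega))
    (rho : set Omega -> set Psi) : set (set Psi) :=
  [set S | forall E, F E -> ~ (rho E `<=` S)].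

Definition I_rho_plus (Omega Psi : Type) (F : set (set Omega))
    (rho : set Omega -> set Psi) : set (set Psi) :=
  ~` I_rho F rho.

Definition rho_cluster (Omega Psi : Type) (X : topologicalType)
    (F : set (set Omega)) (rho : set Omega -> set Psi) (x : Psi -> X) : set X :=
  [set eta | forall U, nbhs eta U ->
     exists2 E, F E & rho E `<=` [set s | U (x s)]].

Definition rho_limit (Omega Psi : Type) (X : topologicalType)
    (F : set (set Omega)) (rho : set Omega -> set Psi) (x : Psi -> X) : set X :=
  [set eta | exists2 E, F E & forall U, nbhs eta U ->
     exists2 K, finite_set K & forall s, rho (E `\` K) s -> U (x s)].

(* I_rho-limit points Lambda_x(I_rho): limits of ordinary convergent
   subsequences indexed by an I_rho-positive set. *)
Definition ideal_limit (Omega Psi : Type) (X : topologicalType)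
    (F : set (set Omega)) (rho : set Omega -> set Psi) (x : Psi -> X) : set X :=
  [set eta | exists2 S, I_rho_plus F rho S & forall U, nbhs eta U ->
     finite_set [set s | S s /\ ~ U (x s)]].

(* Main.v *)
Require Import Defs.
From mathcomp Require Import all_boot all_classical topology.
Local Open Scope classical_set_scope.

Theorem proposition2p4 (Omega Psi : Type) (X : topologicalType)
    (F : set (set Omega)) (rho : set Omega -> set Psi) (x : Psi -> X) :
  countably_infinite Omega -> countably_infinite Psi ->
  admissible_family F -> partition_regular F rho ->
  ideal_limit F rho x `<=` rho_limit F rho x /\
  rho_limit F rho x `<=` rho_cluster F rho x.
Proof.
move=> _ _ [_ _ FD] [_ rM _ rS]; split; last first.
  move=> eta [E FE HE] U /HE [K fK HK].
  exists (E `\` K); first exact: FD.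
  by move=> s /HK.
move=> eta [S HS HU].
have [E0 FE0 E0S] : exists2 E0, F E0 & rho E0 `<=` S.
  apply: contrapT => nE; apply: HS => E FE sub; apply: nE; by exists E.
have [E [EE0 FE HE]] := rS _ FE0.
have [Kf HKf] : {Kf : Psi -> set Omega & forall a, rho E a ->
    finite_set (Kf a) /\ ~ rho (E `\` Kf a) a}.
  apply: (@choice _ _ (fun a K => rho E a -> finite_set K /\ ~ rho (E `\` K) a)).
  move=> a; have [ra|nra] := pselect (rho E a).
    by have [K fK nK] := HE a ra; exists K.
  by exists set0.
exists E => // U nU.
pose T := [set s | S s /\ ~ U (x s)] `&` rho E.
exists (\bigcup_(a in T) Kf a).
  apply: bigcup_finite; first exact/finite_setIl/HU.
  by move=> a [_ ra]; case: (HKf a ra).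
move=> s rs.
have FEK : forall K, finite_set K -> F (E `\` K) by move=> K fK; exact: FD.
have fB : finite_set (\bigcup_(a in T) Kf a).
  apply: bigcup_finite; first exact/finite_setIl/HU.
  by move=> a [_ ra]; case: (HKf a ra).
have rEs : rho E s.
  by apply: (rM _ _ (FEK _ fB) FE _ _ rs) => z [].
apply: contrapT => nUs.
have Ts : T s by split => //; split => //; apply: E0S; apply: (rM _ _ FE FE0 EE0).
have [fKs nKs] := HKf s rEs.
apply: nKs; apply: (rM _ _ (FEK _ fB) (FEK _ fKs) _ _ rs).
by move=> z [Ez nz]; split => // kz; apply: nz; exists s.
Qed.
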